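(* Let $p,q\in\mathbb N$ with $\gcd(p,q)=1$ and suppose $\alpha=\sqrt{p/q}$ is irrational. (1) If the equation $x^2-pqy^2=-1$ has no integer solution, then for $A\in GL(2,\mathbb Z)$, $\pi(A)$ restricts to an isometric automorphism of $\mathcal A_\alpha$ if and only if $A=\begin{bmatrix} x_1&qy_1\\ py_1&x_1\end{bmatrix}^n$ for some $n\in\mathbb Z$, where $(x_1,y_1)$ is the fundamental solution of $x^2-pqy^2=1$. (2) If $x^2-pqy^2=-1$ has an integer solution, then for $A\in GL(2,\mathbb Z)$, $\pi(A)$ restricts to an isometric automorphism of $\mathcal A_\alpha$ if and only if $A=\begin{bmatrix} x_1'&qy_1'\\ py_1'&x_1'\end{bmatrix}^n$ for some $n\in\mathbb Z$, where $(x_1',y_1')$ is the fundamental solution of $x^2-pqy^2=-1$.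
   Context: For a positive irrational $\alpha$, $\mathcal A_\alpha=\{f\in C(\mathbb T^2): \hat f(m,n)=0 \text{ whenever } m+\alpha n<0\}$ ($\mathbb T$ the unit circle, $\hat f$ the Fourier transform on $\mathbb Z^2$), a uniform algebra with the sup norm. For $A=\begin{bmatrix} a&b\\ c&d\end{bmatrix}\in GL(2,\mathbb Z)$, $\pi(A)(f)=f\circ\varphi$ with $\varphi(z,w)=(z^aw^b,z^cw^d)$. For a positive nonsquare integer $N$ and $e\in\{1,-1\}$, the fundamental solution of $x^2-Ny^2=e$ (when a solution exists) is the solution $(x_1,y_1)$ in positive integers with $x_1$ smallest. *)

(* Defs.v *)
From Stdlib Require Export Reals ZArith.
Open Scope R_scope.

(** * The torus and C(T^2)
    A point of T^2 is written (e^{is}, e^{it}); a function on T^2 is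
    represented by its pull-back F : R -> R -> C, 2*PI-periodic in each
    variable, where C is represented as R * R (real part, imaginary part). *)

Definition cfun := R -> R -> (R * R).

Definition Cmod (z : R * R) : R := sqrt (fst z * fst z + snd z * snd z).

Definition periodic2 (f : cfun) : Prop :=
  forall s t, f (s + 2 * PI) t = f s t /\ f s (t + 2 * PI) = f s t.

Definition continuous2 (f : cfun) : Prop :=
  forall s t eps, 0 < eps -> exists delta, 0 < delta /\
    forall s' t', Rabs (s' - s) < delta -> Rabs (t' - t) < delta ->
      Rabs (fst (f s' t') - fst (f s t)) < eps /\
      Rabs (snd (f s' t') - snd (f s t)) < eps.

Definition in_CT2 (f : cfun) : Prop := periodic2 f /\ continuous2 f.

Definition Rint (g : R -> R) (v : R) : Prop :=
  exists pr : Riemann_integrable g 0 (2 * PI), RiemannInt pr = v.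

Definition Rint2 (G : R -> R -> R) (v : R) : Prop :=
  exists h : R -> R, (forall t, Rint (fun s => G s t) (h t)) /\ Rint h v.

(** hat f (m,n) = (1/4pi^2) int int f(s,t) e^{-i(ms+nt)} ds dt  equals 0.
    With f = u + i v and e^{-i th} = cos th - i sin th, the real part of the
    integrand is u cos + v sin and the imaginary part is v cos - u sin. *)
Definition fourier_zero (f : cfun) (m n : Z) : Prop :=
  let th s t := IZR m * s + IZR n * t in
  Rint2 (fun s t => fst (f s t) * cos (th s t) + snd (f s t) * sin (th s t)) 0 /\
  Rint2 (fun s t => snd (f s t) * cos (th s t) - fst (f s t) * sin (th s t)) 0.

Definition in_A (alpha : R) (f : cfun) : Prop :=
  in_CT2 f /\
  forall m n : Z, IZR m + alpha * IZR n < 0 -> fourier_zero f m n.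

Record mat2 := Mat2 { m11 : Z; m12 : Z; m21 : Z; m22 : Z }.

Definition mdet (A : mat2) : Z := (m11 A * m22 A - m12 A * m21 A)%Z.

Definition in_GL2Z (A : mat2) : Prop := mdet A = 1%Z \/ mdet A = (-1)%Z.

Definition mmul (A B : mat2) : mat2 :=
  Mat2 (m11 A * m11 B + m12 A * m21 B)%Z (m11 A * m12 B + m12 A * m22 B)%Z
       (m21 A * m11 B + m22 A * m21 B)%Z (m21 A * m12 B + m22 A * m22 B)%Z.

Definition mid : mat2 := Mat2 1 0 0 1.

(** inverse of a matrix of determinant +-1 (then 1/det = det) *)
Definition minv (A : mat2) : mat2 :=
  let e := mdet A in
  Mat2 (e * m22 A)%Z (- (e * m12 A))%Z (- (e * m21 A))%Z (e * m11 A)%Z.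

Fixpoint mpow_nat (A : mat2) (k : nat) : mat2 :=
  match k with O => mid | S k' => mmul A (mpow_nat A k') end.

(** A ^ n for n : Z (used only for A in GL(2,Z)) *)
Definition mzpow (A : mat2) (n : Z) : mat2 :=
  match n with
  | Z0 => mid
  | Zpos k => mpow_nat A (Pos.to_nat k)
  | Zneg k => mpow_nat (minv A) (Pos.to_nat k)
  end.

(** pi(A) f = f o phi,  phi(z,w) = (z^a w^b, z^c w^d);
    at z = e^{is}, w = e^{it}: phi = (e^{i(as+bt)}, e^{i(cs+dt)}). *)
Definition piA (A : mat2) (f : cfun) : cfun :=
  fun s t => f (IZR (m11 A) * s + IZR (m12 A) * t) (IZR (m21 A) * s + IZR (m22 A) * t).

(** pi(A) restricts to an isometric automorphism of A_alpha:
    it maps A_alpha into A_alpha, onto A_alpha, and preserves sup norms.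
    (Linearity and multiplicativity hold by definition of composition.) *)
Definition restricts_iso_auto (alpha : R) (A : mat2) : Prop :=
  (forall f, in_A alpha f -> in_A alpha (piA A f)) /\
  (forall g, in_A alpha g -> exists f, in_A alpha f /\ piA A f = g) /\
  (forall f, in_A alpha f -> forall M : R,
      (forall s t, Cmod (f s t) <= M) <-> (forall s t, Cmod (piA A f s t) <= M)).

Definition irrational (x : R) : Prop :=
  ~ exists a b : Z, b <> 0%Z /\ x = IZR a / IZR b.

Definition fundamental (N e x1 y1 : Z) : Prop :=
  (0 < x1)%Z /\ (0 < y1)%Z /\ (x1 * x1 - N * y1 * y1 = e)%Z /\
  forall x y : Z, (0 < x)%Z -> (0 < y)%Z -> (x * x - N * y * y = e)%Z -> (x1 <= x)%Z.

(* Main.v *)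
Require Import Defs.
From Coquelicot Require Import Coquelicot.
From Stdlib Require Import Lra Lia Psatz FunctionalExtensionality Classical.
Open Scope R_scope.

Definition J (G : R -> R -> R) := forall x y, continuity_2d_pt G x y.

Lemma c2_cont1 G x y : continuity_2d_pt G x y -> continuity_pt (fun u => G u y) x.
Proof.
  intros H. unfold continuity_pt, continue_in, limit1_in, limit_in. intros eps Heps.
  destruct (H (mkposreal eps Heps)) as [d Hd]. exists d. split; [apply cond_pos|].
  intros z [_ Hz]. simpl in *. unfold R_dist in *. apply Hd; [exact Hz|].
  rewrite Rminus_diag, Rabs_R0; apply cond_pos.
Qed.

Lemma c2_cont2 G x y : continuity_2d_pt G x y -> continuity_pt (fun v => G x v) y.
Proof.
  intros H. unfold continuity_pt, continue_in, limit1_in, limit_in. intros eps Heps.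
  destruct (H (mkposreal eps Heps)) as [d Hd]. exists d. split; [apply cond_pos|].
  intros z [_ Hz]. simpl in *. unfold R_dist in *. apply Hd; [|exact Hz].
  rewrite Rminus_diag, Rabs_R0; apply cond_pos.
Qed.

Lemma cpt_cont f x : continuity_pt f x -> continuous f x.
Proof. intros H. apply continuity_pt_filterlim. exact H. Qed.

Lemma exJ1 G t a b : J G -> ex_RInt (fun s => G s t) a b.
Proof. intros H. apply (ex_RInt_continuous (V:=R_CompleteNormedModule)). intros z _. apply cpt_cont, (c2_cont1 G z t), H. Qed.

Lemma param_cont_le G a b t0 : J G -> a <= b ->
  continuity_pt (fun t => RInt (fun s => G s t) a b) t0.
Proof.
  intros HG Hab. unfold continuity_pt, continue_in, limit1_in, limit_in. intros eps Heps.
  assert (He' : 0 < eps / (b - a + 1)) by (apply Rdiv_lt_0_compat; lra).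
  destruct (uniform_continuity_2d G a b (t0 - 1) (t0 + 1)
     (fun x y _ _ => HG x y) (mkposreal _ He')) as [d Hd].
  exists (Rmin d 1). split; [apply Rmin_pos; [apply cond_pos|lra]|].
  intros t [_ Ht]. simpl in *. unfold R_dist in *.
  rewrite <- (RInt_minus (fun s => G s t) (fun s => G s t0)) by (apply exJ1; auto).
  eapply Rle_lt_trans.
  - apply abs_RInt_le_const with (M := eps / (b - a + 1)); auto.
    + apply ex_RInt_minus; apply exJ1; auto.
    + intros s Hs. unfold minus, plus, opp; simpl. left.
      replace (G s t + - G s t0) with (G s t - G s t0) by ring.
      assert (Hm := Rmin_l d 1). assert (Hm1 := Rmin_r d 1).
      apply (Hd s t0 s t); try lra.
      all: try (rewrite Rminus_diag, Rabs_R0; apply cond_pos).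
      all: try (apply Rabs_lt_between' in Ht; lra).
      all: try (eapply Rlt_le_trans; [exact Ht|exact Hm]).
  - apply Rmult_lt_reg_r with (b - a + 1); [lra|].
    replace ((b - a) * (eps / (b - a + 1)) * (b - a + 1)) with ((b - a) * eps) by (field; lra).
    nra.
Qed.

Lemma param_cont G a b t0 : J G ->
  continuity_pt (fun t => RInt (fun s => G s t) a b) t0.
Proof.
  intros HG. destruct (Rle_dec a b) as [H|H].
  - apply param_cont_le; auto.
  - apply continuity_pt_ext with (f := fun t => - RInt (fun s => G s t) b a).
    + intros t. rewrite <- (opp_RInt_swap (fun s => G s t)) by (apply exJ1; auto).
      unfold opp; simpl. ring.
    + apply continuity_pt_opp, param_cont_le; auto; lra.
Qed.

Definition I2 (G : R -> R -> R) := RInt (fun t => RInt (fun s => G s t) 0 (2*PI)) 0 (2*PI).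

Lemma J_swap G : J G -> J (fun s t => G t s).
Proof.
  intros H x y eps. destruct (H y x eps) as [d Hd]. exists d. intros u v Hu Hv. apply Hd; auto.
Qed.

Lemma deriv_inner G t x0 : J G ->
  is_derive (fun u => RInt (fun s => G s t) 0 u) x0 (G x0 t).
Proof.
  intros HG. apply (is_derive_RInt (V:=R_NormedModule) (fun s => G s t) (fun u => RInt (fun s => G s t) 0 u) 0 x0).
  - apply filter_forall. intros b0. apply (RInt_correct (V:=R_CompleteNormedModule)). apply exJ1; auto.
  - apply cpt_cont, (c2_cont1 G x0 t), HG.
Qed.

Lemma fubini G : J G -> I2 (fun s t => G t s) = I2 G.
Proof.
  intros HG.
  set (F := fun x => RInt (fun t => RInt (fun s => G s t) 0 x) 0 (2*PI)).
  assert (HD : forall x, is_derive F x (RInt (fun t => G x t) 0 (2*PI))).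
  { intros x.
    assert (H := is_derive_RInt_param (fun x t => RInt (fun s => G s t) 0 x) 0 (2*PI) x).
    rewrite (RInt_ext (fun t => Derive (fun u => RInt (fun s => G s t) 0 u) x) (fun t => G x t)) in H.
    2:{ intros t _. apply is_derive_unique, deriv_inner; auto. }
    apply H.
    - apply filter_forall. intros x0 t _. eexists. apply deriv_inner; auto.
    - intros t _. apply continuity_2d_pt_ext with (f := fun u v => G u v).
      + intros u v. symmetry. apply is_derive_unique, deriv_inner; auto.
      + apply HG.
    - apply filter_forall. intros y. apply (ex_RInt_continuous (V:=R_CompleteNormedModule)).
      intros z _. apply cpt_cont. apply param_cont; auto. }
  assert (HI := is_RInt_derive (V:=R_CompleteNormedModule) F (fun x => RInt (fun t => G x t) 0 (2*PI)) 0 (2*PI)).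
  assert (HF0 : F 0 = 0).
  { unfold F. rewrite (RInt_ext _ (fun _ => 0)).
    - rewrite RInt_const. apply (scal_zero_r (V:=R_NormedModule)).
    - intros t _. apply (RInt_point (V:=R_CompleteNormedModule)). }
  unfold I2. symmetry. transitivity (F (2*PI)); [reflexivity|].
  transitivity (minus (F (2*PI)) (F 0)).
  { rewrite HF0. unfold minus, plus, opp; simpl. rewrite Ropp_0, Rplus_0_r. reflexivity. }
  symmetry. apply is_RInt_unique. apply HI.
  - intros x _. apply HD.
  - intros x _. apply cpt_cont. apply (param_cont (fun s t => G t s)). apply J_swap; auto.
Qed.

Definition C1 (g : R -> R) := forall x, continuity_pt g x.

Lemma exC g a b : C1 g -> ex_RInt g a b.
Proof. intros H. apply (ex_RInt_continuous (V:=R_CompleteNormedModule)). intros z _. apply cpt_cont, H. Qed.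

Lemma C1_shift g v : C1 g -> C1 (fun y => g (y + v)).
Proof.
  intros H x. apply (continuity_pt_comp (fun y => y + v) g).
  - apply continuity_pt_plus; [apply continuity_pt_id|apply continuity_pt_const; intros ? ?; auto].
  - apply H.
Qed.

Lemma chasles g a b c : C1 g -> RInt g a b + RInt g b c = RInt g a c.
Proof. intros H. apply (RInt_Chasles (V:=R_CompleteNormedModule)); apply exC; auto. Qed.

Lemma rswap g a b : C1 g -> RInt g b a = - RInt g a b.
Proof. intros H. rewrite <- (opp_RInt_swap (V:=R_CompleteNormedModule)) by (apply exC; auto). reflexivity. Qed.

Lemma rshift g v a b : C1 g -> RInt (fun y => g (y + v)) a b = RInt g (a + v) (b + v).
Proof.
  intros H. assert (E := RInt_comp_lin (V:=R_CompleteNormedModule) g 1 v a b).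
  rewrite !Rmult_1_l in E. rewrite <- E by (apply exC; auto).
  apply RInt_ext. intros x _. unfold scal; simpl; unfold mult; simpl.
  replace (1 * x + v) with (x + v) by ring. ring.
Qed.

Lemma rneg g a b : C1 g -> RInt (fun y => g (- y)) a b = - RInt g (- a) (- b).
Proof.
  intros H. assert (E := RInt_comp_lin (V:=R_CompleteNormedModule) g (-1) 0 a b).
  replace (-1 * a + 0) with (-a) in E by ring. replace (-1 * b + 0) with (-b) in E by ring.
  rewrite <- E by (apply exC; auto).
  rewrite (RInt_ext (fun y => scal (-1) (g (-1 * y + 0))) (fun y => opp (g (- y)))).
  2:{ intros x _. replace (-1 * x + 0) with (-x) by ring. unfold scal, opp; simpl.
      unfold mult; simpl. ring. }
  rewrite (RInt_opp (V:=R_CompleteNormedModule)). unfold opp; simpl. symmetry. apply Ropp_involutive.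
  apply (ex_RInt_continuous (V:=R_CompleteNormedModule)). intros z _. apply cpt_cont.
  apply (continuity_pt_comp (fun y => - y) g); [apply continuity_pt_opp, continuity_pt_id|apply H].
Qed.

Lemma trans_inv g c : C1 g -> (forall x, g (x + 2*PI) = g x) ->
  RInt (fun s => g (s + c)) 0 (2*PI) = RInt g 0 (2*PI).
Proof.
  intros H P. rewrite rshift by auto. rewrite Rplus_0_l.
  rewrite <- (chasles g c 0 (2*PI + c)) by auto.
  rewrite <- (chasles g 0 (2*PI) (2*PI + c)) by auto.
  rewrite (rswap g 0 c) by auto.
  replace (RInt g (2*PI) (2*PI + c)) with (RInt g 0 c). lra.
  replace (2*PI) with (0 + 2*PI) at 1 by ring. replace (2*PI + c) with (c + 2*PI) by ring.
  rewrite <- rshift by auto. apply RInt_ext. intros x _. rewrite P. reflexivity.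
Qed.

Lemma refl_inv g : C1 g -> (forall x, g (x + 2*PI) = g x) ->
  RInt (fun s => g (- s)) 0 (2*PI) = RInt g 0 (2*PI).
Proof.
  intros H P. rewrite rneg by auto. rewrite Ropp_0. rewrite (rswap g) by auto.
  rewrite Ropp_involutive.
  rewrite <- (trans_inv g (- (2*PI))) by auto. rewrite rshift by auto.
  f_equal; ring.
Qed.

Definition per2 (G : R -> R -> R) := forall s t, G (s + 2*PI) t = G s t /\ G s (t + 2*PI) = G s t.
Definition JP G := J G /\ per2 G.

Lemma perZ1 {T : Type} (g : R -> T) : (forall x, g (x + 2*PI) = g x) -> forall k x, g (x + 2*PI*IZR k) = g x.
Proof.
  intros P k. induction k using Z.peano_ind; intros x.
  - replace (x + 2*PI*IZR 0) with x by (simpl; ring). reflexivity.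
  - rewrite succ_IZR. replace (x + 2*PI*(IZR k + 1)) with ((x + 2*PI*IZR k) + 2*PI) by ring.
    rewrite P. apply IHk.
  - rewrite <- (P (x + 2*PI*IZR (Z.pred k))). rewrite <- Z.sub_1_r, minus_IZR.
    replace (x + 2 * PI * (IZR k - 1) + 2 * PI) with (x + 2*PI*IZR k) by ring. apply IHk.
Qed.

Lemma perZ2 G : per2 G -> forall k l s t, G (s + 2*PI*IZR k) (t + 2*PI*IZR l) = G s t.
Proof.
  intros P k l s t.
  rewrite (perZ1 (fun x => G x (t + 2*PI*IZR l))) by (intros; apply P).
  apply (perZ1 (fun y => G s y)). intros; apply P.
Qed.

Lemma c2_comp G g1 g2 x y : continuity_2d_pt G (g1 x y) (g2 x y) ->
  continuity_2d_pt g1 x y -> continuity_2d_pt g2 x y ->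
  continuity_2d_pt (fun u v => G (g1 u v) (g2 u v)) x y.
Proof.
  intros HG H1 H2 eps. destruct (HG eps) as [d Hd]. destruct (H1 d) as [d1 Hd1].
  destruct (H2 d) as [d2 Hd2].
  assert (Hp : 0 < Rmin d1 d2) by (apply Rmin_pos; apply cond_pos).
  exists (mkposreal _ Hp). simpl. intros u v Hu Hv.
  apply Hd; [apply Hd1|apply Hd2]; eapply Rlt_le_trans; eauto using Rmin_l, Rmin_r.
Qed.

Lemma c2_lin a b x y : continuity_2d_pt (fun s t => a * s + b * t) x y.
Proof.
  apply continuity_2d_pt_plus; apply continuity_2d_pt_mult;
  try apply continuity_2d_pt_const; try apply continuity_2d_pt_id1; apply continuity_2d_pt_id2.
Qed.

Definition comp (G : R -> R -> R) (A : mat2) : R -> R -> R :=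
  fun s t => G (IZR (m11 A) * s + IZR (m12 A) * t) (IZR (m21 A) * s + IZR (m22 A) * t).

Lemma J_comp G A : J G -> J (comp G A).
Proof.
  intros H x y. unfold comp. apply (c2_comp G (fun s t => IZR (m11 A) * s + IZR (m12 A) * t)
    (fun s t => IZR (m21 A) * s + IZR (m22 A) * t)); [apply H|apply c2_lin|apply c2_lin].
Qed.

Lemma per2_comp G A : per2 G -> per2 (comp G A).
Proof.
  intros P s t. unfold comp. split.
  - rewrite <- (perZ2 G P (m11 A) (m21 A) (IZR (m11 A) * s + IZR (m12 A) * t) (IZR (m21 A) * s + IZR (m22 A) * t)). f_equal; ring.
  - rewrite <- (perZ2 G P (m12 A) (m22 A) (IZR (m11 A) * s + IZR (m12 A) * t) (IZR (m21 A) * s + IZR (m22 A) * t)). f_equal; ring.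
Qed.

Lemma JP_comp G A : JP G -> JP (comp G A).
Proof. intros [H1 H2]. split; [apply J_comp|apply per2_comp]; auto. Qed.

Lemma I2_ext G H : (forall s t, G s t = H s t) -> I2 G = I2 H.
Proof.
  intros E. unfold I2. apply RInt_ext. intros t _. apply RInt_ext. intros s _. apply E.
Qed.

Definition Pinv (A : mat2) := forall G, JP G -> I2 (comp G A) = I2 G.

Lemma comp_mul G A B s t : comp G (mmul A B) s t = comp (comp G A) B s t.
Proof.
  destruct A, B. unfold comp, mmul; simpl. rewrite !plus_IZR, !mult_IZR. f_equal; ring.
Qed.

Lemma P_mul A B : Pinv A -> Pinv B -> Pinv (mmul A B).
Proof.
  intros HA HB G HG. rewrite (I2_ext _ _ (comp_mul G A B)). rewrite HB by (apply JP_comp; auto).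
  apply HA; auto.
Qed.

Lemma P_mid : Pinv mid.
Proof. intros G _. apply I2_ext. intros s t. unfold comp; simpl. f_equal; ring. Qed.

Lemma C1_of_J G t : J G -> C1 (fun s => G s t).
Proof. intros H x. apply (c2_cont1 G x t), H. Qed.

Lemma P_T k : Pinv (Mat2 1 k 0 1).
Proof.
  intros G [HJ HP]. unfold I2, comp; simpl. apply RInt_ext. intros t _.
  rewrite (RInt_ext _ (fun s => G (s + IZR k * t) t)).
  - apply (trans_inv (fun s => G s t)); [apply C1_of_J; auto|intros; apply HP].
  - intros s _. f_equal; ring.
Qed.

Lemma P_N : Pinv (Mat2 (-1) 0 0 1).
Proof.
  intros G [HJ HP]. unfold I2, comp; simpl. apply RInt_ext. intros t _.
  rewrite (RInt_ext _ (fun s => G (- s) t)).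
  - apply (refl_inv (fun s => G s t)); [apply C1_of_J; auto|intros; apply HP].
  - intros s _. f_equal; ring.
Qed.

Lemma P_Sw : Pinv (Mat2 0 1 1 0).
Proof.
  intros G [HJ HP]. rewrite <- (fubini G HJ). apply I2_ext. intros s t. unfold comp; simpl. f_equal; ring.
Qed.

Lemma P_diag a d : (a = 1 \/ a = -1)%Z -> (d = 1 \/ d = -1)%Z -> Pinv (Mat2 a 0 0 d).
Proof.
  intros [-> | ->] [-> | ->].
  - apply P_mid.
  - replace (Mat2 1 0 0 (-1)) with (mmul (Mat2 0 1 1 0) (mmul (Mat2 (-1) 0 0 1) (Mat2 0 1 1 0))) by reflexivity.
    apply P_mul; [apply P_Sw|apply P_mul; [apply P_N|apply P_Sw]].
  - apply P_N.
  - replace (Mat2 (-1) 0 0 (-1)) with (mmul (Mat2 (-1) 0 0 1) (mmul (Mat2 0 1 1 0) (mmul (Mat2 (-1) 0 0 1) (Mat2 0 1 1 0)))) by reflexivity.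
    apply P_mul; [apply P_N|]. apply P_mul; [apply P_Sw|apply P_mul; [apply P_N|apply P_Sw]].
Qed.

Lemma P_GL : forall A, in_GL2Z A -> Pinv A.
Proof.
  intros A. remember (Z.abs_nat (m21 A)) as n eqn:Hn. revert A Hn.
  induction n as [n IH] using lt_wf_ind. intros [a b c d] Hn HA; simpl in Hn.
  unfold in_GL2Z, mdet in HA; simpl in HA.
  destruct (Z.eq_dec c 0) as [Hc|Hc].
  - subst c. rewrite Z.mul_0_r, Z.sub_0_r in HA.
    assert (Ha : (a = 1 \/ a = -1)%Z /\ (d = 1 \/ d = -1)%Z).
    { destruct HA as [HA|HA].
      - split; [apply (Z.eq_mul_1 a d)|apply (Z.eq_mul_1 d a)]; lia.
      - split; [apply (Z.eq_mul_1 a (-d))|apply (Z.eq_mul_1 d (-a))]; lia. }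
    destruct Ha as [Ha Hd].
    replace (Mat2 a b 0 d) with (mmul (Mat2 a 0 0 d) (Mat2 1 (a*b) 0 1)).
    + apply P_mul; [apply P_diag; auto|apply P_T].
    + unfold mmul; simpl. f_equal; try ring. replace (a * (a * b) + 0 * 1)%Z with ((a*a)*b)%Z by ring.
      destruct Ha as [-> | ->]; ring.
  - set (k := Z.quot a c). set (r := Z.rem a c).
    assert (Ea : a = (c * k + r)%Z) by (apply Z.quot_rem; auto).
    assert (Hr : (Z.abs r < Z.abs c)%Z) by (apply Z.rem_bound_abs; auto).
    replace (Mat2 a b c d) with (mmul (Mat2 1 k 0 1) (mmul (Mat2 0 1 1 0) (Mat2 c d r (b - k*d)))).
    + apply P_mul; [apply P_T|apply P_mul; [apply P_Sw|]].
      apply (IH (Z.abs_nat r)); [lia|reflexivity|].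
      unfold in_GL2Z, mdet; simpl. rewrite Ea in HA.
      replace (c * (b - k * d) - d * r)%Z with (- ((c * k + r) * d - b * c))%Z by ring. lia.
    + unfold mmul; cbn [m11 m12 m21 m22]. rewrite Ea. f_equal; ring.
Qed.

Lemma Rint_unique g v : Rint g v -> v = RInt g 0 (2*PI).
Proof. intros [pr <-]. symmetry. apply RInt_Reals. Qed.

Lemma Rint_ex g : ex_RInt g 0 (2*PI) -> Rint g (RInt g 0 (2*PI)).
Proof. intros H. exists (ex_RInt_Reals_0 _ _ _ H). symmetry. apply RInt_Reals. Qed.

Lemma Rint2_unique G v : Rint2 G v -> v = I2 G.
Proof.
  intros [h [H1 H2]]. apply Rint_unique in H2. rewrite H2. unfold I2. apply RInt_ext.
  intros t _. apply Rint_unique, H1.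
Qed.

Lemma Rint2_J G : J G -> Rint2 G (I2 G).
Proof.
  intros HG. exists (fun t => RInt (fun s => G s t) 0 (2*PI)). split.
  - intros t. apply Rint_ex, exJ1; auto.
  - apply Rint_ex. apply (ex_RInt_continuous (V:=R_CompleteNormedModule)). intros z _.
    apply cpt_cont, param_cont; auto.
Qed.

Lemma cont2_J f : continuous2 f -> J (fun s t => fst (f s t)) /\ J (fun s t => snd (f s t)).
Proof.
  intros H. split; intros x y eps; destruct (H x y eps (cond_pos eps)) as [d [Hd H']];
  exists (mkposreal d Hd); intros u v Hu Hv; apply H'; auto.
Qed.

Lemma J_cont2 f : J (fun s t => fst (f s t)) -> J (fun s t => snd (f s t)) -> continuous2 f.
Proof.
  intros H1 H2 s t eps Heps. destruct (H1 s t (mkposreal eps Heps)) as [d1 Hd1].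
  destruct (H2 s t (mkposreal eps Heps)) as [d2 Hd2].
  exists (Rmin d1 d2). split; [apply Rmin_pos; apply cond_pos|].
  intros s' t' Hs Ht. split; [apply Hd1|apply Hd2]; eapply Rlt_le_trans; eauto using Rmin_l, Rmin_r.
Qed.

Definition FR (f : cfun) (m n : Z) := fun s t =>
  fst (f s t) * cos (IZR m * s + IZR n * t) + snd (f s t) * sin (IZR m * s + IZR n * t).
Definition FI (f : cfun) (m n : Z) := fun s t =>
  snd (f s t) * cos (IZR m * s + IZR n * t) - fst (f s t) * sin (IZR m * s + IZR n * t).

Lemma fz_iff f m n : fourier_zero f m n <-> Rint2 (FR f m n) 0 /\ Rint2 (FI f m n) 0.
Proof. unfold fourier_zero, FR, FI. cbv zeta. tauto. Qed.

Lemma cos_per x : cos (x + 2*PI) = cos x.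
Proof. rewrite cos_plus, cos_2PI, sin_2PI. ring. Qed.
Lemma sin_per x : sin (x + 2*PI) = sin x.
Proof. rewrite sin_plus, cos_2PI, sin_2PI. ring. Qed.

Lemma J_trig (w : R -> R) (Hw : forall x, continuity_pt w x) m n :
  J (fun s t => w (IZR m * s + IZR n * t)).
Proof. intros x y. apply continuity_1d_2d_pt_comp; [apply Hw|apply c2_lin]. Qed.

Lemma J_F u v m n : J u -> J v ->
  J (fun s t => u s t * cos (IZR m * s + IZR n * t) + v s t * sin (IZR m * s + IZR n * t)) /\
  J (fun s t => v s t * cos (IZR m * s + IZR n * t) - u s t * sin (IZR m * s + IZR n * t)).
Proof.
  intros Hu Hv. assert (Hc := J_trig cos continuity_cos m n).
  assert (Hs := J_trig sin continuity_sin m n).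
  split; intros x y.
  - apply continuity_2d_pt_plus; apply continuity_2d_pt_mult; auto.
  - apply continuity_2d_pt_minus; apply continuity_2d_pt_mult; auto.
Qed.

Lemma per_trig (w : R -> R) (Hw : forall x, w (x + 2*PI) = w x) m n :
  per2 (fun s t => w (IZR m * s + IZR n * t)).
Proof.
  intros s t. split.
  - rewrite <- (perZ1 w Hw m (IZR m * s + IZR n * t)). f_equal. ring.
  - rewrite <- (perZ1 w Hw n (IZR m * s + IZR n * t)). f_equal. ring.
Qed.

Lemma per_F u v m n : per2 u -> per2 v ->
  per2 (fun s t => u s t * cos (IZR m * s + IZR n * t) + v s t * sin (IZR m * s + IZR n * t)) /\
  per2 (fun s t => v s t * cos (IZR m * s + IZR n * t) - u s t * sin (IZR m * s + IZR n * t)).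
Proof.
  intros Hu Hv. assert (Hc := per_trig cos cos_per m n). assert (Hs := per_trig sin sin_per m n).
  split; intros s t; destruct (Hu s t) as [U1 U2]; destruct (Hv s t) as [V1 V2];
  destruct (Hc s t) as [C1 C2]; destruct (Hs s t) as [S1 S2]; split;
  cbv beta in *; rewrite ?U1, ?U2, ?V1, ?V2, ?C1, ?C2, ?S1, ?S2; reflexivity.
Qed.

Definition eig (al : R) (A : mat2) (l : R) :=
  IZR (m11 A) + al * IZR (m12 A) = l /\ IZR (m21 A) + al * IZR (m22 A) = l * al.

Lemma GL_e A : in_GL2Z A -> (mdet A * mdet A = 1)%Z.
Proof. intros [H|H]; rewrite H; reflexivity. Qed.

Lemma minv_left A : in_GL2Z A -> mmul (minv A) A = mid.
Proof.
  intros H. apply GL_e in H. destruct A as [a b c d]. unfold mmul, minv, mid in *; unfold mdet in *;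
  cbv zeta in *; cbn [m11 m12 m21 m22] in *. f_equal; nia.
Qed.

Lemma minv_right A : in_GL2Z A -> mmul A (minv A) = mid.
Proof.
  intros H. apply GL_e in H. destruct A as [a b c d]. unfold mmul, minv, mid in *; unfold mdet in *;
  cbv zeta in *; cbn [m11 m12 m21 m22] in *. f_equal; nia.
Qed.

Lemma mdet_mul A B : mdet (mmul A B) = (mdet A * mdet B)%Z.
Proof. destruct A as [a b c d], B as [a1 b1 c1 d1]. unfold mdet, mmul; cbn [m11 m12 m21 m22]. ring. Qed.

Lemma GL_mul A B : in_GL2Z A -> in_GL2Z B -> in_GL2Z (mmul A B).
Proof. unfold in_GL2Z. rewrite mdet_mul. intros [->| ->] [->| ->]; simpl; auto. Qed.

Lemma mdet_minv A : mdet (minv A) = (mdet A * mdet A * mdet A)%Z.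
Proof. destruct A as [a b c d]. unfold minv; cbv zeta; unfold mdet; cbn [m11 m12 m21 m22]. ring. Qed.

Lemma GL_minv A : in_GL2Z A -> in_GL2Z (minv A).
Proof. unfold in_GL2Z. rewrite mdet_minv. intros [->| ->]; simpl; auto. Qed.

Lemma GL_mid : in_GL2Z mid.
Proof. left. reflexivity. Qed.

Lemma eig_mul_R a11 a12 a21 a22 b11 b12 b21 b22 al l mu :
  a11 + al*a12 = l -> a21 + al*a22 = l*al -> b11 + al*b12 = mu -> b21 + al*b22 = mu*al ->
  (a11*b11 + a12*b21) + al*(a11*b12 + a12*b22) = l*mu /\
  (a21*b11 + a22*b21) + al*(a21*b12+a22*b22) = l*mu*al.
Proof.
  intros H1 H2 H3 H4. subst l mu.
  assert (E2 : a21 = (a11 + al * a12) * al - al*a22) by lra.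
  assert (E4 : b21 = (b11 + al * b12) * al - al*b22) by lra.
  subst a21 b21. split; ring.
Qed.

Lemma eig_mul al A B l mu : eig al A l -> eig al B mu -> eig al (mmul A B) (l*mu).
Proof.
  destruct A as [a b c d], B as [a1 b1 c1 d1]. unfold eig, mmul; cbn [m11 m12 m21 m22]. rewrite !plus_IZR, !mult_IZR.
  intros [H1 H2] [H3 H4]. apply eig_mul_R; auto.
Qed.

Lemma eig_mid al : eig al mid 1.
Proof. unfold eig, mid; simpl. split; ring. Qed.

Lemma eig_minv_R a b c d e al l : a + al*b = l -> c + al*d = l*al -> e*(a*d - b*c) = 1 -> l <> 0 ->
  e*d + al*(-(e*b)) = /l /\ -(e*c) + al*(e*a) = /l * al.
Proof.
  intros H1 H2 H3 Hl. subst l.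
  assert (Ec : c = (a + al*b)*al - al*d) by lra.
  split.
  - assert (K : (e*d + al*(-(e*b))) * (a + al*b) = 1).
    { rewrite <- H3. rewrite Ec. ring. }
    apply (Rmult_eq_reg_r (a + al*b)); [rewrite K; field; auto|auto].
  - assert (K : (-(e*c) + al*(e*a)) * (a + al*b) = al).
    { transitivity (al * (e*(a*d - b*c))); [rewrite Ec; ring|rewrite H3; ring]. }
    apply (Rmult_eq_reg_r (a + al*b)); [rewrite K; field; auto|auto].
Qed.

Lemma eig_minv al A l : in_GL2Z A -> eig al A l -> l <> 0 -> eig al (minv A) (/l).
Proof.
  intros HA [H1 H2] Hl. apply GL_e in HA. destruct A as [a b c d].
  unfold eig, minv, mdet in *; cbn [m11 m12 m21 m22] in *.
  rewrite !opp_IZR, !mult_IZR, !minus_IZR, !mult_IZR.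
  apply eig_minv_R; auto.
  rewrite <- !mult_IZR, <- minus_IZR, <- mult_IZR, HA. reflexivity.
Qed.

Lemma L_transform al B mu m n : eig al B mu ->
  IZR (m11 B * m + m21 B * n) + al * IZR (m12 B * m + m22 B * n) = mu * (IZR m + al * IZR n).
Proof.
  intros [H1 H2]. rewrite !plus_IZR, !mult_IZR. subst mu.
  assert (E : IZR (m21 B) = (IZR (m11 B) + al * IZR (m12 B)) * al - al * IZR (m22 B)) by lra.
  rewrite E. ring.
Qed.

Lemma perZpair (f : cfun) : periodic2 f -> forall k l s t, f (s + 2*PI*IZR k) (t + 2*PI*IZR l) = f s t.
Proof.
  intros P k l s t.
  rewrite (perZ1 (fun x => f x (t + 2*PI*IZR l))) by (intros; apply P).
  apply (perZ1 (fun y => f s y)). intros; apply P.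
Qed.

Lemma pres al A l : in_GL2Z A -> eig al A l -> 0 < l ->
  forall f, in_A al f -> in_A al (piA A f).
Proof.
  intros HA He Hl f [[Hper Hc] Hfz].
  destruct (cont2_J f Hc) as [Ju Jv].
  assert (Pu : per2 (fun s t => fst (f s t))).
  { intros s t; destruct (Hper s t) as [E1 E2]; rewrite E1, E2. split; reflexivity. }
  assert (Pv : per2 (fun s t => snd (f s t))).
  { intros s t; destruct (Hper s t) as [E1 E2]; rewrite E1, E2. split; reflexivity. }
  split; [split|].
  - intros s t. unfold piA. split.
    + rewrite <- (perZpair f Hper (m11 A) (m21 A) (IZR (m11 A) * s + IZR (m12 A) * t) (IZR (m21 A) * s + IZR (m22 A) * t)).
      f_equal; ring.
    + rewrite <- (perZpair f Hper (m12 A) (m22 A) (IZR (m11 A) * s + IZR (m12 A) * t) (IZR (m21 A) * s + IZR (m22 A) * t)).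
      f_equal; ring.
  - apply J_cont2; [exact (J_comp _ A Ju)|exact (J_comp _ A Jv)].
  - intros m n Hmn.
    set (B := minv A).
    assert (HB : eig al B (/l)) by (apply eig_minv; auto; lra).
    set (m' := (m11 B * m + m21 B * n)%Z). set (n' := (m12 B * m + m22 B * n)%Z).
    assert (Hm' : IZR m' + al * IZR n' < 0).
    { unfold m', n'. rewrite (L_transform al B (/l)) by auto.
      apply Rmult_lt_reg_l with l; [lra|]. rewrite <- Rmult_assoc, Rinv_r by lra. lra. }
    destruct (proj1 (fz_iff f m' n') (Hfz m' n' Hm')) as [R1 R2].
    assert (BA := minv_left A HA). fold B in BA.
    assert (E1 : (m11 B * m11 A + m12 B * m21 A = 1)%Z) by (exact (f_equal m11 BA)).
    assert (E2 : (m21 B * m11 A + m22 B * m21 A = 0)%Z) by (exact (f_equal m21 BA)).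
    assert (E3 : (m11 B * m12 A + m12 B * m22 A = 0)%Z) by (exact (f_equal m12 BA)).
    assert (E4 : (m21 B * m12 A + m22 B * m22 A = 1)%Z) by (exact (f_equal m22 BA)).
    assert (Em : IZR m = IZR m' * IZR (m11 A) + IZR n' * IZR (m21 A)).
    { rewrite <- !mult_IZR, <- plus_IZR. f_equal. unfold m', n'.
      transitivity (m * (m11 B * m11 A + m12 B * m21 A) + n * (m21 B * m11 A + m22 B * m21 A))%Z;
      [rewrite E1, E2; ring|ring]. }
    assert (En : IZR n = IZR m' * IZR (m12 A) + IZR n' * IZR (m22 A)).
    { rewrite <- !mult_IZR, <- plus_IZR. f_equal. unfold m', n'.
      transitivity (m * (m11 B * m12 A + m12 B * m22 A) + n * (m21 B * m12 A + m22 B * m22 A))%Z;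
      [rewrite E3, E4; ring|ring]. }
    assert (Earg : forall s t, IZR m * s + IZR n * t =
        IZR m' * (IZR (m11 A) * s + IZR (m12 A) * t) + IZR n' * (IZR (m21 A) * s + IZR (m22 A) * t)).
    { intros s t. rewrite Em, En. ring. }
    destruct (J_F _ _ m' n' Ju Jv) as [JR JI].
    destruct (per_F _ _ m' n' Pu Pv) as [PR PI].
    apply fz_iff. split.
    + assert (EF : FR (piA A f) m n = comp (FR f m' n') A).
      { apply functional_extensionality; intros s. apply functional_extensionality; intros t.
        unfold FR, comp, piA. rewrite Earg. reflexivity. }
      rewrite EF. replace 0 with (I2 (comp (FR f m' n') A)).
      * apply Rint2_J. apply J_comp. exact JR.
      * rewrite (P_GL A HA (FR f m' n')) by (split; auto). symmetry. apply Rint2_unique; auto.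
    + assert (EF : FI (piA A f) m n = comp (FI f m' n') A).
      { apply functional_extensionality; intros s. apply functional_extensionality; intros t.
        unfold FI, comp, piA. rewrite Earg. reflexivity. }
      rewrite EF. replace 0 with (I2 (comp (FI f m' n') A)).
      * apply Rint2_J. apply J_comp. exact JI.
      * rewrite (P_GL A HA (FI f m' n')) by (split; auto). symmetry. apply Rint2_unique; auto.
Qed.

Lemma piA_mul A B g s t : piA A (piA B g) s t = piA (mmul B A) g s t.
Proof.
  destruct A as [a b c d], B as [a1 b1 c1 d1]. unfold piA, mmul; cbn [m11 m12 m21 m22].
  rewrite !plus_IZR, !mult_IZR. f_equal; ring.
Qed.

Lemma piA_mid g s t : piA mid g s t = g s t.
Proof. unfold piA, mid; cbn [m11 m12 m21 m22]. f_equal; ring. Qed.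

Lemma restricts_of_eig al A l : in_GL2Z A -> eig al A l -> 0 < l -> restricts_iso_auto al A.
Proof.
  intros HA He Hl.
  assert (HB : eig al (minv A) (/l)) by (apply eig_minv; auto; lra).
  assert (HBl : 0 < /l) by (apply Rinv_0_lt_compat; auto).
  split; [|split].
  - apply (pres al A l); auto.
  - intros g Hg. exists (piA (minv A) g). split.
    + apply (pres al (minv A) (/l)); auto. apply GL_minv; auto.
    + apply functional_extensionality; intros s. apply functional_extensionality; intros t.
      rewrite piA_mul, minv_left by auto. apply piA_mid.
  - intros f _ M. split.
    + intros H s t. apply H.
    + intros H s t. rewrite <- (piA_mid f s t), <- (minv_right A HA), <- piA_mul. apply H.
Qed.

Definition mono (j k : Z) : cfun := fun s t => (cos (IZR j * s + IZR k * t), sin (IZR j * s + IZR k * t)).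

Lemma int_trig_zero (w W : R -> R) a c :
  (forall x, is_derive W x (w x)) -> (forall x, continuity_pt w x) ->
  (forall x, W (x + 2*PI) = W x) -> a <> 0%Z ->
  RInt (fun s => w (IZR a * s + c)) 0 (2*PI) = 0.
Proof.
  intros HD HC HP Ha. assert (Ha' : IZR a <> 0) by (apply not_0_IZR; auto).
  apply is_RInt_unique.
  set (F := fun s => / IZR a * W (IZR a * s + c)).
  assert (E : minus (F (2*PI)) (F 0) = 0).
  { unfold F, minus, plus, opp; simpl.
    replace (IZR a * (2*PI) + c) with (c + 2*PI*IZR a) by ring. rewrite (perZ1 W HP).
    replace (IZR a * 0 + c) with c by ring. ring. }
  cut (is_RInt (fun s => w (IZR a * s + c)) 0 (2*PI) (minus (F (2*PI)) (F 0))); [rewrite E; auto|].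
  apply (is_RInt_derive (V:=R_CompleteNormedModule)).
  - intros x _.
      assert (H1 : is_derive (fun s => IZR a * s + c) x (IZR a)) by (auto_derive; auto; ring).
      assert (H2 := is_derive_comp W (fun s => IZR a * s + c) x _ _ (HD _) H1).
      assert (H3 := is_derive_scal _ x (/ IZR a) _ H2).
      replace (w (IZR a * x + c)) with (/ IZR a * scal (IZR a) (w (IZR a * x + c))).
      * exact H3.
      * unfold scal; simpl; unfold mult; simpl. field. auto.
  - intros x _. apply cpt_cont. apply (continuity_pt_comp (fun s => IZR a * s + c) w); [|apply HC].
      apply continuity_pt_plus; [apply continuity_pt_scal, continuity_pt_id|apply continuity_pt_const; intros ? ?; auto].
Qed.

Lemma cos_deriv x : is_derive sin x (cos x).
Proof. auto_derive; auto; ring. Qed.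
Lemma sin_deriv x : is_derive (fun y => - cos y) x (sin x).
Proof. auto_derive; auto; ring. Qed.
Lemma mcos_per x : - cos (x + 2*PI) = - cos x.
Proof. rewrite cos_per; auto. Qed.

Lemma I2_trig_zero (w W : R -> R) a b :
  (forall x, is_derive W x (w x)) -> (forall x, continuity_pt w x) ->
  (forall x, W (x + 2*PI) = W x) -> (a <> 0 \/ b <> 0)%Z ->
  I2 (fun s t => w (IZR a * s + IZR b * t)) = 0.
Proof.
  intros HD HC HP Hab. unfold I2. destruct (Z.eq_dec a 0) as [Ha|Ha].
  - subst a. destruct Hab as [Hab|Hb]; [congruence|].
    rewrite (RInt_ext _ (fun t => scal (2*PI) (w (IZR b * t + 0)))).
    + rewrite (RInt_scal (V:=R_CompleteNormedModule)).
      * rewrite (int_trig_zero w W b 0); auto. unfold scal; simpl; unfold mult; simpl. ring.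
      * apply exC. intros x. apply (continuity_pt_comp (fun s => IZR b * s + 0) w); [|apply HC].
        apply continuity_pt_plus; [apply continuity_pt_scal, continuity_pt_id|apply continuity_pt_const; intros ? ?; auto].
    + intros t _. rewrite (RInt_ext _ (fun _ => w (IZR b * t + 0))).
      * rewrite RInt_const. f_equal. ring.
      * intros s _. f_equal. simpl. ring.
  - rewrite (RInt_ext _ (fun _ => 0)).
    + rewrite RInt_const. apply (scal_zero_r (V:=R_NormedModule)).
    + intros t _. apply (int_trig_zero w W a (IZR b * t)); auto.
Qed.

Lemma Rint2_trig0 (w W : R -> R) a b :
  (forall x, is_derive W x (w x)) -> (forall x, continuity_pt w x) ->
  (forall x, W (x + 2*PI) = W x) -> (a <> 0 \/ b <> 0)%Z ->
  Rint2 (fun s t => w (IZR a * s + IZR b * t)) 0.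
Proof.
  intros. rewrite <- (I2_trig_zero w W a b) by auto. apply Rint2_J. apply J_trig; auto.
Qed.

Lemma mono_in_A al j k : 0 <= IZR j + al * IZR k -> in_A al (mono j k).
Proof.
  intros Hjk. split; [split|].
  - intros s t. unfold mono.
    destruct (per_trig cos cos_per j k s t) as [C1 C2]. destruct (per_trig sin sin_per j k s t) as [S1 S2].
    simpl in *. rewrite C1, C2, S1, S2. split; reflexivity.
  - apply J_cont2; [exact (J_trig cos continuity_cos j k)|exact (J_trig sin continuity_sin j k)].
  - intros m n Hmn. assert (Hne : (j - m <> 0 \/ k - n <> 0)%Z).
    { destruct (Z.eq_dec j m); destruct (Z.eq_dec k n); try lia. subst. lra. }
    apply fz_iff. split.
    + replace (FR (mono j k) m n) with (fun s t => cos (IZR (j - m) * s + IZR (k - n) * t)).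
      * apply (Rint2_trig0 cos sin); auto using cos_deriv, continuity_cos, sin_per.
      * apply functional_extensionality; intros s. apply functional_extensionality; intros t.
        unfold FR, mono; simpl. rewrite <- cos_minus. f_equal. rewrite !minus_IZR. ring.
    + replace (FI (mono j k) m n) with (fun s t => sin (IZR (j - m) * s + IZR (k - n) * t)).
      * apply (Rint2_trig0 sin (fun y => - cos y)); auto using sin_deriv, continuity_sin, mcos_per.
      * apply functional_extensionality; intros s. apply functional_extensionality; intros t.
        unfold FI, mono; simpl. rewrite <- sin_minus. f_equal. rewrite !minus_IZR. ring.
Qed.

Lemma Rint2_one_false G : Rint2 G 0 -> (forall s t, G s t = 1) -> False.
Proof.
  intros H E. apply Rint2_unique in H. rewrite (I2_ext G (fun _ _ => 1)) in H by auto.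
  unfold I2 in H. rewrite (RInt_ext (fun t => RInt (fun _ => 1) 0 (2*PI)) (fun _ => 2*PI)) in H.
  - rewrite RInt_const in H. unfold scal in H; simpl in H; unfold mult in H; simpl in H.
    assert (HP := PI_RGT_0). nra.
  - intros t _. rewrite RInt_const. unfold scal; simpl; unfold mult; simpl. ring.
Qed.

Lemma halfplane al A : restricts_iso_auto al A -> forall j k, 0 <= IZR j + al * IZR k ->
  0 <= IZR (m11 A * j + m21 A * k) + al * IZR (m12 A * j + m22 A * k).
Proof.
  intros [Hpres _] j k Hjk.
  destruct (Rle_or_lt 0 (IZR (m11 A * j + m21 A * k) + al * IZR (m12 A * j + m22 A * k))) as [H|Hneg]; auto.
  exfalso. destruct (Hpres _ (mono_in_A al j k Hjk)) as [_ Hfz].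
  destruct (proj1 (fz_iff _ _ _) (Hfz _ _ Hneg)) as [R1 _].
  apply (Rint2_one_false _ R1). intros s t. unfold FR, piA, mono; simpl.
  set (th := IZR (m11 A * j + m21 A * k) * s + IZR (m12 A * j + m22 A * k) * t).
  replace (IZR j * (IZR (m11 A) * s + IZR (m12 A) * t) + IZR k * (IZR (m21 A) * s + IZR (m22 A) * t)) with th
    by (unfold th; rewrite !plus_IZR, !mult_IZR; ring).
  rewrite <- (sin2_cos2 th). unfold Rsqr. ring.
Qed.

Lemma irr_lin al x y : irrational al -> IZR x + al * IZR y = 0 -> x = 0%Z /\ y = 0%Z.
Proof.
  intros Hi H. destruct (Z.eq_dec y 0) as [Hy|Hy].
  - subst y. split; auto. apply eq_IZR_R0. simpl in H. lra.
  - exfalso. apply Hi. exists (- x)%Z, y. split; auto.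
    assert (Hy' : IZR y <> 0) by (apply not_0_IZR; auto).
    rewrite opp_IZR. field_simplify_eq; [lra|auto].
Qed.

Lemma eig_of_halfplane al A : irrational al -> in_GL2Z A ->
  (forall j k, 0 <= IZR j + al * IZR k ->
     0 <= IZR (m11 A * j + m21 A * k) + al * IZR (m12 A * j + m22 A * k)) ->
  eig al A (IZR (m11 A) + al * IZR (m12 A)) /\ 0 < IZR (m11 A) + al * IZR (m12 A).
Proof.
  intros Hi HA H. destruct A as [a b c d]; cbn [m11 m12 m21 m22] in *.
  set (be := IZR a + al * IZR b). set (ga := IZR c + al * IZR d).
  assert (Key : forall j k, 0 <= IZR j + al * IZR k -> 0 <= be * IZR j + ga * IZR k).
  { intros j k Hjk. specialize (H j k Hjk). rewrite !plus_IZR, !mult_IZR in H. unfold be, ga. lra. }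
  assert (Hga : ga = be * al).
  { destruct (Req_dec ga (be * al)) as [E|E]; auto. exfalso.
    set (de := ga - be * al). assert (Hde : de <> 0) by (unfold de; lra).
    assert (Hk : forall k, - Rabs be <= de * IZR k).
    { intros k. destruct (archimed (- (al * IZR k))) as [U1 U2].
      set (j := up (- (al * IZR k))) in *.
      assert (L1 : 0 <= IZR j + al * IZR k) by lra.
      specialize (Key j k L1).
      assert (E2 : be * IZR j + ga * IZR k = be * (IZR j + al * IZR k) + de * IZR k) by (unfold de; ring).
      rewrite E2 in Key.
      assert (L2 : IZR j + al * IZR k <= 1) by lra.
      destruct (Rle_or_lt 0 be).
      - rewrite Rabs_right by lra. nra.
      - rewrite Rabs_left by lra. nra. }
    destruct (archimed (Rabs be / Rabs de)) as [V1 V2].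
    set (K := up (Rabs be / Rabs de)) in *.
    assert (Hade : 0 < Rabs de) by (apply Rabs_pos_lt; auto).
    assert (HK : Rabs be < Rabs de * IZR K).
    { apply (Rmult_lt_compat_l (Rabs de)) in V1; auto.
      replace (Rabs de * (Rabs be / Rabs de)) with (Rabs be) in V1 by (field; lra). lra. }
    destruct (Rle_or_lt 0 de).
    + specialize (Hk (- K)%Z). rewrite opp_IZR in Hk. rewrite (Rabs_right de) in HK by lra. lra.
    + specialize (Hk K). rewrite (Rabs_left de) in HK by lra. lra. }
  assert (Hbe0 : 0 <= be).
  { specialize (Key 1%Z 0%Z). simpl in Key. lra. }
  split.
  - unfold eig; cbn [m11 m12 m21 m22]. split; [reflexivity|]. fold be. fold ga. exact Hga.
  - destruct Hbe0 as [|Hbe0]; auto. exfalso.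
    destruct (irr_lin al a b Hi) as [-> ->]; [fold be; lra|].
    destruct (irr_lin al c d Hi) as [-> ->]; [fold ga; rewrite Hga, <- Hbe0; ring|].
    destruct HA as [HA|HA]; unfold mdet in HA; simpl in HA; discriminate.
Qed.

Section Pell.
Variables (p q : Z) (al : R).
Hypothesis Hi : irrational al.
Hypothesis Hal : 0 < al.
Hypothesis Hsq : al * al * IZR q = IZR p.
Hypothesis Hq : (0 < q)%Z.
Hypothesis Hg : Z.gcd p q = 1%Z.

Lemma eig_form A l : eig al A l -> m22 A = m11 A /\ (q * m21 A = p * m12 A)%Z.
Proof.
  destruct A as [a b c d]. unfold eig; cbn [m11 m12 m21 m22]. intros [H1 H2]. subst l.
  destruct (irr_lin al (q * c - p * b) (q * (d - a)) Hi) as [E1 E2].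
  - rewrite !minus_IZR, !mult_IZR, !minus_IZR.
    replace (IZR c) with ((IZR a + al * IZR b) * al - al * IZR d) by lra.
    rewrite <- Hsq. ring.
  - split; [|lia]. apply Z.mul_eq_0 in E2. lia.
Qed.

Lemma eig_unique A B l : eig al A l -> eig al B l -> A = B.
Proof.
  intros HA HB. destruct (eig_form A l HA) as [FA1 FA2]. destruct (eig_form B l HB) as [FB1 FB2].
  destruct A as [a b c d], B as [a' b' c' d']. unfold eig in *; cbn [m11 m12 m21 m22] in *.
  destruct HA as [HA1 _], HB as [HB1 _].
  destruct (irr_lin al (a - a') (b - b') Hi) as [E1 E2].
  { rewrite !minus_IZR. lra. }
  assert (a = a') by lia. assert (b = b') by lia. subst.
  assert (c = c') by nia. subst. reflexivity.
Qed.

Lemma eig_struct A l : eig al A l ->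
  exists a y, A = Mat2 a (q*y) (p*y) a /\ mdet A = (a*a - p*q*y*y)%Z /\ l = IZR a + al * IZR q * IZR y.
Proof.
  intros He. destruct (eig_form A l He) as [F1 F2].
  assert (Hdiv : (q | m12 A)%Z).
  { apply (Z.gauss q p). exists (m21 A). lia. rewrite Z.gcd_comm. auto. }
  destruct Hdiv as [y Hy]. exists (m11 A), y.
  assert (Hc : m21 A = (p * y)%Z).
  { apply (Z.mul_cancel_l _ _ q); [lia|]. rewrite F2, Hy. ring. }
  destruct A as [a b c d]; cbn [m11 m12 m21 m22] in *. subst. split; [|split].
  - f_equal; ring.
  - unfold mdet; cbn [m11 m12 m21 m22]. ring.
  - destruct He as [He _]. cbn [m11 m12] in He. rewrite <- He, mult_IZR. ring.
Qed.

Lemma min_unit e x1 y1 a y : fundamental (p*q) e x1 y1 -> (e = 1 \/ e = -1)%Z ->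
  (a*a - p*q*y*y = e)%Z -> 1 < IZR a + al * IZR q * IZR y ->
  IZR x1 + al * IZR q * IZR y1 <= IZR a + al * IZR q * IZR y.
Proof.
  intros [Hx1 [Hy1 [Hf Hmin]]] He Hn Hu.
  assert (Hq' : 0 < IZR q) by (apply IZR_lt; auto).
  assert (Hp : (0 < p)%Z).
  { apply lt_IZR. rewrite <- Hsq. apply Rmult_lt_0_compat; [apply Rmult_lt_0_compat|]; lra. }
  assert (Hprod : (IZR a + al * IZR q * IZR y) * (IZR a - al * IZR q * IZR y) = IZR e).
  { rewrite <- Hn. rewrite !minus_IZR, !mult_IZR. rewrite <- Hsq. ring. }
  set (u := IZR a + al * IZR q * IZR y) in *. set (u' := IZR a - al * IZR q * IZR y) in *.
  assert (Hu' : -1 < u' < 1).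
  { destruct He as [-> | ->]; simpl in Hprod; split; nra. }
  assert (Ha : (0 < a)%Z) by (apply lt_IZR; unfold u, u' in *; lra).
  assert (Hy : (0 < y)%Z).
  { apply lt_IZR. assert (0 < al * IZR q * IZR y) by (unfold u, u' in *; lra).
    destruct (Rle_or_lt (IZR y) 0); auto. assert (0 < al * IZR q) by nra. nra. }
  assert (Hxa : (x1 <= a)%Z) by (apply (Hmin a y); auto).
  assert (Hyy : (y1 <= y)%Z).
  { assert (S1 : (x1 * x1 <= a * a)%Z) by nia.
    assert (S2 : ((p*q) * (y1 * y1) <= (p*q) * (y * y))%Z) by nia.
    assert (S3 : (0 < p * q)%Z) by nia.
    assert (S4 : (y1 * y1 <= y * y)%Z) by (apply (Z.mul_le_mono_pos_l _ _ (p*q)); auto).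
    destruct (Z.le_gt_cases y1 y); auto. nia. }
  apply IZR_le in Hxa. apply IZR_le in Hyy. assert (0 < al * IZR q) by nra. unfold u. nra.
Qed.

Lemma exponent (eps l : R) : 1 < eps -> 0 < l ->
  exists n : Z, powerRZ eps n <= l < powerRZ eps (n + 1).
Proof.
  intros He Hl. assert (Hle : 0 < ln eps) by (rewrite <- ln_1; apply ln_increasing; lra).
  set (t := ln l / ln eps). destruct (archimed t) as [U1 U2].
  exists (up t - 1)%Z. rewrite !powerRZ_Rpower by lra. unfold Rpower.
  rewrite <- (exp_ln l) by auto.
  assert (E1 : IZR (up t - 1) * ln eps <= ln l).
  { rewrite minus_IZR. apply (Rmult_le_reg_r (/ ln eps)); [apply Rinv_0_lt_compat; auto|].
    replace ((IZR (up t) - 1) * ln eps * / ln eps) with (IZR (up t) - 1) by (field; lra).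
    fold (ln l / ln eps). fold t. simpl. lra. }
  assert (E2 : ln l < IZR (up t - 1 + 1) * ln eps).
  { replace (up t - 1 + 1)%Z with (up t) by ring.
    apply (Rmult_lt_reg_r (/ ln eps)); [apply Rinv_0_lt_compat; auto|].
    replace (IZR (up t) * ln eps * / ln eps) with (IZR (up t)) by (field; lra).
    fold (ln l / ln eps). fold t. lra. }
  split.
  - destruct (Req_dec (IZR (up t - 1) * ln eps) (ln l)) as [E|E]; [rewrite E; lra|].
    left. apply exp_increasing. lra.
  - apply exp_increasing. auto.
Qed.



Lemma eig_pow_nat A l k : eig al A l -> eig al (mpow_nat A k) (l ^ k).
Proof.
  intros H. induction k as [|k IH]; simpl.
  - apply eig_mid.
  - apply eig_mul; auto.
Qed.

Lemma GL_pow_nat A k : in_GL2Z A -> in_GL2Z (mpow_nat A k).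
Proof. intros H. induction k; simpl; [apply GL_mid|apply GL_mul; auto]. Qed.

Lemma eig_mzpow A l : in_GL2Z A -> eig al A l -> l <> 0 -> forall z, eig al (mzpow A z) (powerRZ l z).
Proof.
  intros HA He Hl [|k|k]; simpl.
  - apply eig_mid.
  - apply eig_pow_nat; auto.
  - rewrite <- pow_inv. apply eig_pow_nat. apply eig_minv; auto.
Qed.

Lemma GL_mzpow A z : in_GL2Z A -> in_GL2Z (mzpow A z).
Proof.
  intros HA. destruct z; simpl; [apply GL_mid|apply GL_pow_nat; auto|apply GL_pow_nat, GL_minv; auto].
Qed.

Lemma pell_gen M eps : in_GL2Z M -> eig al M eps -> 1 < eps ->
  (forall C mu, in_GL2Z C -> eig al C mu -> 1 < mu -> mu < eps -> False) ->
  forall A l, in_GL2Z A -> eig al A l -> 0 < l -> exists n, A = mzpow M n.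
Proof.
  intros HM HeM Heps NoSmall A l HA HeA Hl.
  destruct (exponent eps l Heps Hl) as [n [H1 H2]].
  assert (Hne : eps <> 0) by lra.
  set (P := powerRZ eps n) in *.
  assert (HP : 0 < P) by (apply powerRZ_lt; lra).
  rewrite powerRZ_add, powerRZ_1 in H2 by auto. fold P in H2.
  exists n.
  assert (HC : eig al (mmul A (mzpow M (- n))) (l * / P)).
  { apply eig_mul; auto. unfold P. rewrite <- powerRZ_neg'. apply eig_mzpow; auto. }
  assert (HGC : in_GL2Z (mmul A (mzpow M (- n)))) by (apply GL_mul; auto; apply GL_mzpow; auto).
  assert (E : l = P).
  { destruct (Req_dec l P) as [E|E]; auto. exfalso.
    apply (NoSmall _ _ HGC HC).
    - apply (Rmult_lt_reg_r P); auto. rewrite Rmult_assoc, Rinv_l by lra. lra.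
    - apply (Rmult_lt_reg_r P); auto. rewrite Rmult_assoc, Rinv_l by lra. lra. }
  apply (eig_unique _ _ l); auto. rewrite E. unfold P. apply eig_mzpow; auto.
Qed.

Lemma M_facts e x1 y1 : fundamental (p*q) e x1 y1 -> (e = 1 \/ e = -1)%Z ->
  in_GL2Z (Mat2 x1 (q*y1) (p*y1) x1) /\
  eig al (Mat2 x1 (q*y1) (p*y1) x1) (IZR x1 + al * IZR (q*y1)) /\
  1 < IZR x1 + al * IZR (q*y1) /\ mdet (Mat2 x1 (q*y1) (p*y1) x1) = e.
Proof.
  intros [Hx [Hy [Hf _]]] He.
  assert (Hd : mdet (Mat2 x1 (q*y1) (p*y1) x1) = e) by (unfold mdet; cbn [m11 m12 m21 m22]; rewrite <- Hf; ring).
  split; [|split; [|split]]; auto.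
  - unfold in_GL2Z. rewrite Hd. auto.
  - unfold eig; cbn [m11 m12 m21 m22]. split; auto. rewrite !mult_IZR, <- Hsq. ring.
  - assert (1 <= IZR x1) by (apply IZR_le; lia).
    assert (0 < IZR (q*y1)) by (apply IZR_lt; nia). nra.
Qed.

Lemma case1 x1 y1 : (~ exists x y : Z, (x * x - p * q * y * y = -1)%Z) ->
  fundamental (p*q) 1 x1 y1 -> forall A, in_GL2Z A ->
  (restricts_iso_auto al A <-> exists n : Z, A = mzpow (Mat2 x1 (q * y1) (p * y1) x1) n).
Proof.
  intros Hno Hf A HA.
  destruct (M_facts 1 x1 y1 Hf (or_introl eq_refl)) as [HGM [HeM [Heps HdM]]].
  set (eps := IZR x1 + al * IZR (q*y1)) in *.
  split.
  - intros Hr. destruct (eig_of_halfplane al A Hi HA (halfplane al A Hr)) as [He Hl].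
    apply (pell_gen _ eps HGM HeM Heps) with (l := IZR (m11 A) + al * IZR (m12 A)); auto.
    intros C mu HGC HeC Hm1 Hm2.
    destruct (eig_struct C mu HeC) as [a [y [EC [Ed Emu]]]].
    destruct HGC as [Hd|Hd]; rewrite Ed in Hd.
    + assert (eps <= mu).
      { unfold eps. rewrite Emu, mult_IZR, <- Rmult_assoc.
        apply (min_unit 1 x1 y1 a y); auto. rewrite <- Emu; auto. }
      lra.
    + apply Hno. exists a, y. auto.
  - intros [n ->]. apply (restricts_of_eig al _ (powerRZ eps n)).
    + apply GL_mzpow; auto.
    + apply eig_mzpow; auto. lra.
    + apply powerRZ_lt. lra.
Qed.

Lemma case2 x1 y1 :
  fundamental (p*q) (-1) x1 y1 -> forall A, in_GL2Z A ->
  (restricts_iso_auto al A <-> exists n : Z, A = mzpow (Mat2 x1 (q * y1) (p * y1) x1) n).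
Proof.
  intros Hf A HA.
  destruct (M_facts (-1) x1 y1 Hf (or_intror eq_refl)) as [HGM [HeM [Heps HdM]]].
  set (eps := IZR x1 + al * IZR (q*y1)) in *.
  set (M := Mat2 x1 (q*y1) (p*y1) x1) in *.
  split.
  - intros Hr. destruct (eig_of_halfplane al A Hi HA (halfplane al A Hr)) as [He Hl].
    apply (pell_gen _ eps HGM HeM Heps) with (l := IZR (m11 A) + al * IZR (m12 A)); auto.
    intros C mu HGC HeC Hm1 Hm2.
    destruct (eig_struct C mu HeC) as [a [y [EC [Ed Emu]]]].
    destruct HGC as [Hd|Hd].
    + set (D := mmul M (minv C)).
      assert (HeD : eig al D (eps * / mu)) by (apply eig_mul; auto; apply eig_minv; [left|..]; auto; lra).
      assert (HdD : mdet D = (-1)%Z) by (unfold D; rewrite mdet_mul, mdet_minv, Hd, HdM; reflexivity).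
      destruct (eig_struct D _ HeD) as [a' [y' [ED [Ed' Emu']]]].
      assert (G1 : 1 < eps * / mu).
      { apply (Rmult_lt_reg_r mu); [lra|]. rewrite Rmult_assoc, Rinv_l by lra. lra. }
      assert (G2 : eps * / mu < eps).
      { apply (Rmult_lt_reg_r mu); [lra|]. rewrite Rmult_assoc, Rinv_l by lra. nra. }
      assert (eps <= eps * / mu).
      { unfold eps at 1. rewrite Emu', mult_IZR, <- Rmult_assoc.
        apply (min_unit (-1) x1 y1 a' y'); auto. rewrite <- Ed'. auto. rewrite <- Emu'; auto. }
      lra.
    + assert (eps <= mu).
      { unfold eps. rewrite Emu, mult_IZR, <- Rmult_assoc.
        apply (min_unit (-1) x1 y1 a y); auto. rewrite <- Ed; auto. rewrite <- Emu; auto. }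
      lra.
  - intros [n ->]. apply (restricts_of_eig al _ (powerRZ eps n)).
    + apply GL_mzpow; auto.
    + apply eig_mzpow; auto. lra.
    + apply powerRZ_lt. lra.
Qed.

End Pell.

Theorem mainTheorem15 (p q : Z) (Hp : (0 <= p)%Z) (Hq : (0 < q)%Z)
  (Hgcd : Z.gcd p q = 1%Z)
  (Hirr : irrational (sqrt (IZR p / IZR q))) :
  ((~ exists x y : Z, (x * x - p * q * y * y = -1)%Z) ->
     forall x1 y1 : Z, fundamental (p * q) 1 x1 y1 ->
     forall A : mat2, in_GL2Z A ->
       (restricts_iso_auto (sqrt (IZR p / IZR q)) A <->
        exists n : Z, A = mzpow (Mat2 x1 (q * y1) (p * y1) x1) n))
  /\
  ((exists x y : Z, (x * x - p * q * y * y = -1)%Z) ->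
     forall x1 y1 : Z, fundamental (p * q) (-1) x1 y1 ->
     forall A : mat2, in_GL2Z A ->
       (restricts_iso_auto (sqrt (IZR p / IZR q)) A <->
        exists n : Z, A = mzpow (Mat2 x1 (q * y1) (p * y1) x1) n)).
Proof.
  set (al := sqrt (IZR p / IZR q)) in *.
  assert (Hq' : 0 < IZR q) by (apply IZR_lt; auto).
  assert (Hp' : 0 <= IZR p) by (apply IZR_le; auto).
  assert (Hal : 0 < al).
  { destruct (sqrt_pos (IZR p / IZR q)) as [H|H]; [exact H|].
    exfalso. apply Hirr. exists 0%Z, 1%Z. split; [lia|]. unfold al. rewrite <- H. field. }
  assert (Hsq : al * al * IZR q = IZR p).
  { unfold al. rewrite (sqrt_sqrt (IZR p / IZR q)).
    - field. lra.
    - apply Rmult_le_pos; [lra|]. left. apply Rinv_0_lt_compat. lra. }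
  split.
  - intros Hno x1 y1 Hf A HA. apply (case1 p q al Hirr Hal Hsq Hq Hgcd x1 y1 Hno Hf A HA).
  - intros _ x1 y1 Hf A HA. apply (case2 p q al Hirr Hal Hsq Hq Hgcd x1 y1 Hf A HA).
Qed.
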